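(* Let $A\in\mathbb{R}^{n\times n}$, $B\in\mathbb{R}^{m\times m}$, $C:=\operatorname{diag}(A,B)$. Fix $k\in\{1,\dots,n+m\}$, let $r:=\binom{n+m}{k}$, $i_1:=\max\{0,k-n\}$, $i_2:=\min\{m,k\}$. For $i\in\{i_1,\dots,i_2\}$ let $\mu_i$ be the matrix measure induced by an $L_{p_i}$ vector norm $|\cdot|_{p_i}$ (the $p_i$ possibly different). Partition $x\in\mathbb{R}^r$ as $x=(x^{i_1},\dots,x^{i_2})$ with $x^i\in\mathbb{R}^{\binom{n}{k-i}\binom{m}{i}}$, let $|\cdot|_0$ be a monotonic norm on $\mathbb{R}^{i_2-i_1+1}$, and define the norm $|x|:=\big|\,(|x^{i_1}|_{p_{i_1}},\dots,|x^{i_2}|_{p_{i_2}})^T\big|_0$. Let $P\in\mathbb{R}^{r\times r}$ be a permutation matrix such that $C^{[k]}=P\,\operatorname{diag}_{i\in\{i_1,\dots,i_2\}}(A^{[k-i]}\oplus B^{[i]})\,P^{-1}$ (such $P$ exists), define the norm $|x|_P:=|P^{-1}x|$, and let $\mu_P$ be the matrix measure induced by $|\cdot|_P$. Then \[ \mu_P\big(C^{[k]}\big)=\max_{i\in\{i_1,\dots,i_2\}}\big\{\mu_i(A^{[k-i]})+\mu_i(B^{[i]})\big\}, \] and \[ \min_{i\in\{i_1,\dots,i_2\}}\big\{-\mu_i(-A^{[k-i]})-\mu_i(-B^{[i]})\big\}\le\mu_P\big(C^{[k]}\big). \]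
   Context: For $M\in\mathbb{R}^{p\times q}$, $M^{(k)}$ is the matrix of all $k\times k$ minors in lexicographic order; for square $M$, $M^{[k]}:=\frac{d}{dt}(\exp(Mt))^{(k)}|_{t=0}$, with $M^{(0)}:=1$, $M^{[0]}:=0$. Kronecker sum: $X\oplus Y:=X\otimes I_b+I_a\otimes Y$ for $X\in\mathbb{R}^{a\times a},Y\in\mathbb{R}^{b\times b}$. $\operatorname{diag}_{i\in\{i_1,\dots,i_2\}}(M_i)$ is block-diagonal with blocks $M_{i_1},\dots,M_{i_2}$ in order. A norm $|\cdot|_0$ on $\mathbb{R}^s$ is monotonic if $|u|_0\le|v|_0$ whenever $|u_j|\le|v_j|$ for all $j$. The matrix measure induced by a vector norm with induced matrix norm $\|\cdot\|$ is $\mu(M):=\lim_{\varepsilon\to0^+}(\|I+\varepsilon M\|-1)/\varepsilon$. *)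

(* Defs.v *)
From HB Require Import structures.
From mathcomp Require Import all_boot all_order all_algebra.
From mathcomp Require Import all_classical all_reals all_analysis.
From mathcomp Require Import zify.
Set Implicit Arguments. Unset Strict Implicit. Unset Printing Implicit Defensive.
Import Order.TTheory GRing.Theory Num.Theory.
Import numFieldNormedType.Exports.
Local Open Scope classical_set_scope.
Local Open Scope ring_scope.

(** k-subsets of [lo, lo+len) as increasing lists, in lexicographic order. *)
Fixpoint subs (lo len k : nat) : seq (seq nat) :=
  match len with
  | 0 => if k is 0 then [:: [::]] else [::]
  | len'.+1 => if k is k'.+1
               then map (cons lo) (subs lo.+1 len' k') ++ subs lo.+1 len' k
               else [:: [::]]
  end.

Section Mx.
Variable R : realType.

(** entry access by natural numbers (0 outside the range) *)
Definition mxnat p q (M : 'M[R]_(p, q)) (r c : nat) : R :=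
  match insub r, insub c with
  | Some i, Some j => M i j
  | _, _ => 0
  end.

Definition compound (k p q : nat) (M : 'M[R]_(p, q)) : 'M[R]_('C(p, k), 'C(q, k)) :=
  \matrix_(i, j)
    \det (\matrix_(a < k, b < k)
      mxnat M (nth 0%N (nth [::] (subs 0 p k) i) a)
              (nth 0%N (nth [::] (subs 0 q k) j) b)).

Definition expmx (s : nat) (M : 'M[R]_s) : 'M[R]_s :=
  \matrix_(i, j) limn (series (fun l : nat => (M ^+ l) i j / (l`!)%:R)).

Definition addcomp (k s : nat) (M : 'M[R]_s) : 'M[R]_('C(s, k)) :=
  \matrix_(i, j) derive1 (fun t : R => compound k (expmx (t *: M)) i j) 0.

Definition kron a b (X : 'M[R]_a) (Y : 'M[R]_b) : 'M[R]_(a * b) :=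
  \matrix_(r, c) (mxnat X (r %/ b) (c %/ b) * mxnat Y (r %% b) (c %% b)).
Definition kronsum a b (X : 'M[R]_a) (Y : 'M[R]_b) : 'M[R]_(a * b) :=
  kron X 1%:M + kron 1%:M Y.

Definition Lp_norm (p : \bar R) {s : nat} (x : 'cV[R]_s) : R :=
  match p with
  | EFin q => (\sum_(j < s) `|x j 0| `^ q) `^ (q^-1)
  | _ => \big[Num.max/0]_(j < s) `|x j 0|
  end.

Definition is_norm (s : nat) (nv : 'cV[R]_s -> R) : Prop :=
  [/\ forall x, nv x = 0 -> x = 0,
      forall (a : R) x, nv (a *: x) = `|a| * nv x &
      forall x y, nv (x + y) <= nv x + nv y].
Definition monotonic (s : nat) (nv : 'cV[R]_s -> R) : Prop :=
  forall u v : 'cV[R]_s, (forall j, `|u j 0| <= `|v j 0|) -> nv u <= nv v.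

Definition opnorm (s : nat) (nv : 'cV[R]_s -> R) (M : 'M[R]_s) : R :=
  sup [set nv (M *m x) / nv x | x in [set x : 'cV[R]_s | x != 0]].
Definition matmeas (s : nat) (nv : 'cV[R]_s -> R) (M : 'M[R]_s) : R :=
  lim ((fun e : R => (opnorm nv (1%:M + e *: M) - 1) / e) @ 0^'+).

End Mx.

(** index range i1 = max(0, k-n) (truncated subtraction), i2 = min(m, k) *)
Definition ilo (n k : nat) : nat := (k - n)%N.
Definition ihi (m k : nat) : nat := minn m k.
Definition bdim (n m k : nat) (j : 'I_(ihi m k - ilo n k).+1) : nat :=
  ('C(n, k - (ilo n k + j)) * 'C(m, ilo n k + j))%N.
Arguments bdim : clear implicits.

Lemma bdim_sum (n m k : nat) : (k <= n + m)%N ->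
  (\sum_(j < (ihi m k - ilo n k).+1) bdim n m k j)%N = 'C(n + m, k).
Proof.
move=> hk; rewrite addnC -binomial.Vandermonde /bdim /ilo /ihi.
rewrite -(big_mkord xpredT (fun j => 'C(m, j) * 'C(n, k - j))%N).
have h1 : (k - n <= (minn m k).+1)%N by lia.
have h2 : ((minn m k).+1 <= k.+1)%N by lia.
rewrite (big_cat_nat (n := (k - n)%N)) //=; last by lia.
rewrite (big_cat_nat (n := (minn m k).+1) h1 h2) /=; apply/esym.
rewrite big1_seq ?add0n; last first.
  move=> j /andP[_]; rewrite mem_index_iota => /andP[_ hj]; rewrite [X in (_ * X)%N]bin_small ?muln0 //.
  lia.
rewrite [X in (_ + X)%N]big1_seq ?addn0; last first.
  move=> j /andP[_]; rewrite mem_index_iota => /andP[hj hj2]; rewrite [X in (X * _)%N]bin_small ?mul0n //.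
  lia.
rewrite -[X in \sum_(X <= _ < _) _]add0n big_addn -subSn; last by lia.
rewrite big_mkord; apply: eq_bigr => j _.
by rewrite mulnC addnC.
Qed.

Definition blockD (R : realType) (n m k : nat) (A : 'M[R]_n) (B : 'M[R]_m)
  : 'M[R]_(\sum_(j < (ihi m k - ilo n k).+1) bdim n m k j) :=
  @mxdiag _ _ (bdim n m k)
    (fun j => kronsum (addcomp (k - (ilo n k + j)) A) (addcomp (ilo n k + j) B)).

(* Main.v *)
Require Import Defs.
From HB Require Import structures.
From mathcomp Require Import all_boot all_order all_algebra.
From mathcomp Require Import all_classical all_reals all_analysis.
From mathcomp Require Import ring lra zify.
Import Order.TTheory GRing.Theory Num.Theory.
Import numFieldNormedType.Exports.
Local Open Scope classical_set_scope.
Local Open Scope ring_scope.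

Set Implicit Arguments. Unset Strict Implicit. Unset Printing Implicit Defensive.

Section Gen.
Variable R : realType.
Variable s : nat.
Implicit Types (nv : 'cV[R]_s -> R) (x y : 'cV[R]_s) (M N : 'M[R]_s).

Lemma nv0 nv : is_norm nv -> nv 0 = 0.
Proof. by case=> _ hZ _; rewrite -(scale0r (0 : 'cV[R]_s)) hZ normr0 mul0r. Qed.

Lemma nvN nv x : is_norm nv -> nv (- x) = nv x.
Proof. by case=> _ hZ _; rewrite -scaleN1r hZ normrN1 mul1r. Qed.

Lemma nv_ge0 nv x : is_norm nv -> 0 <= nv x.
Proof.
move=> h; have := h => -[_ _ hD].
have := hD x (- x); rewrite subrr nv0 // nvN // => H.
by rewrite -(@pmulr_rge0 _ 2) // mulr2n mulrDl mul1r.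
Qed.

Lemma nv_gt0 nv x : is_norm nv -> x != 0 -> 0 < nv x.
Proof.
move=> h; have := h => -[h0 _ _] xn0; rewrite lt_neqAle nv_ge0 // andbT.
by apply/eqP => /esym /h0 /eqP; rewrite (negbTE xn0).
Qed.

Lemma nv_sum nv (I : finType) (F : I -> 'cV[R]_s) : is_norm nv ->
  nv (\sum_i F i) <= \sum_i nv (F i).
Proof.
move=> h; have := h => -[_ _ hD].
apply: (big_ind2 (fun a b => nv a <= b)); first by rewrite nv0.
  by move=> a b c d h1 h2; apply: le_trans (hD _ _) (lerD h1 h2).
by [].
Qed.

Definition mnorm nv := is_norm nv /\ monotonic nv.

Definition evec (j : 'I_s) : 'cV[R]_s := delta_mx j 0.

Lemma evec_neq0 j : evec j != 0.
Proof.
apply/negP => /eqP /matrixP /(_ j 0); rewrite !mxE !eqxx /= => /eqP.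
by rewrite oner_eq0.
Qed.

Lemma vec_decomp x : x = \sum_j x j 0 *: evec j.
Proof.
apply/matrixP => i k; rewrite (ord1 k) summxE (bigD1 i) //= big1 ?addr0.
  by rewrite !mxE !eqxx mulr1.
by move=> j /negbTE ji; rewrite !mxE eq_sym ji mulr0.
Qed.

Lemma coord_le nv x j : mnorm nv -> `|x j 0| * nv (evec j) <= nv x.
Proof.
case=> hn hm; have := hn => -[_ hZ _]; rewrite -hZ; apply: hm => i.
rewrite /evec !mxE eqxx andbT; case: (eqVneq i j) => [->|]; first by rewrite /= mulr1.
by rewrite /= mulr0 normr0.
Qed.

Lemma mnorm_bnd nv M : mnorm nv ->
  exists K, 0 <= K /\ forall x, nv (M *m x) <= K * nv x.
Proof.
move=> h; have := h => -[hn _]; have := hn => -[_ hZ hD].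
exists (\sum_j nv (M *m evec j) / nv (evec j)); split.
  by apply: sumr_ge0 => j _; rewrite divr_ge0 ?nv_ge0.
move=> x; rewrite {1}(vec_decomp x) mulmx_sumr mulr_suml.
apply: le_trans (nv_sum _ hn) _; apply: ler_sum => j _.
rewrite -scalemxAr hZ [X in _ <= X]mulrAC [X in X <= _]mulrC -mulrA ler_wpM2l ?nv_ge0 //.
rewrite ler_pdivlMr ?nv_gt0 ?evec_neq0 //; exact: coord_le.
Qed.

Definition Sset nv M := [set nv (M *m x) / nv x | x in [set x : 'cV[R]_s | x != 0]].

Lemma opnorm_ub nv M x : mnorm nv -> nv (M *m x) <= opnorm nv M * nv x.
Proof.
move=> h; have := h => -[hn _].
have [->|xn0] := eqVneq x 0; first by rewrite mulmx0 nv0 // mulr0.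
have [K [K0 HK]] := mnorm_bnd M h.
have hs : has_sup (Sset nv M).
  split; first by exists (nv (M *m x) / nv x); exists x.
  exists K => _ [y /= yn0 <-]; rewrite ler_pdivrMr ?nv_gt0 //.
have H : nv (M *m x) / nv x <= sup (Sset nv M).
  by apply: sup_upper_bound => //; exists x.
by rewrite -ler_pdivrMr ?nv_gt0.
Qed.

Lemma opnorm_le nv M c : mnorm nv -> (0 < s)%N ->
  (forall x, nv (M *m x) <= c * nv x) -> opnorm nv M <= c.
Proof.
move=> [hn _] s0 H; apply: ge_sup.
  have j : 'I_s by exact: Ordinal s0.
  by exists (nv (M *m evec j) / nv (evec j)); exists (evec j) => //; exact: evec_neq0.
by move=> _ [y /= yn0 <-]; rewrite ler_pdivrMr ?nv_gt0.
Qed.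

Lemma opnorm_eq nv M c : is_norm nv ->
  (forall x, nv (M *m x) <= c * nv x) ->
  (forall d, 0 < d -> exists x, x != 0 /\ (c - d) * nv x < nv (M *m x)) ->
  opnorm nv M = c.
Proof.
move=> hn H1 H2; have hs : has_sup (Sset nv M).
  split; last first.
    exists c => _ [y /= yn0 <-]; rewrite ler_pdivrMr ?nv_gt0 //.
  have [x [xn0 _]] := H2 1 ltr01.
  by exists (nv (M *m x) / nv x); exists x.
apply/eqP; rewrite eq_le; apply/andP; split.
  apply: ge_sup; first by case: hs.
  by move=> _ [y /= yn0 <-]; rewrite ler_pdivrMr ?nv_gt0.
apply/ler_addgt0Pr => d d0; rewrite -lerBlDr.
have [x [xn0 Hx]] := H2 d d0.
have H : nv (M *m x) / nv x <= sup (Sset nv M).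
  by apply: sup_upper_bound => //; exists x.
apply: le_trans H; rewrite ler_pdivlMr ?nv_gt0 // ltW //.
Qed.

Lemma opnorm_ge0 nv M : mnorm nv -> (0 < s)%N -> 0 <= opnorm nv M.
Proof.
move=> h s0; have j : 'I_s by exact: Ordinal s0.
have := opnorm_ub M (evec j) h; have := h => -[hn _].
have := nv_gt0 hn (evec_neq0 j) => e0 H.
by rewrite -(pmulr_lge0 _ e0); apply: le_trans H; exact: nv_ge0.
Qed.

Lemma opnormD nv M N : mnorm nv -> (0 < s)%N ->
  opnorm nv (M + N) <= opnorm nv M + opnorm nv N.
Proof.
move=> h s0; apply: opnorm_le => // x.
have := h => -[[_ _ hD] _]; rewrite mulmxDl mulrDl.
apply: le_trans (hD _ _) _; apply: lerD; exact: opnorm_ub.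
Qed.

Lemma opnormZ nv M a : mnorm nv -> (0 < s)%N ->
  opnorm nv (a *: M) <= `|a| * opnorm nv M.
Proof.
move=> h s0; apply: opnorm_le => // x.
have := h => -[[_ hZ _] _]; rewrite -scalemxAl hZ -mulrA ler_wpM2l //.
exact: opnorm_ub.
Qed.

Lemma opnormN nv M : mnorm nv -> (0 < s)%N -> opnorm nv (- M) = opnorm nv M.
Proof.
move=> h s0; apply/eqP; rewrite eq_le; apply/andP; split.
  by rewrite -scaleN1r; apply: le_trans (opnormZ _ _ _ _) _; rewrite // normrN1 mul1r.
rewrite -{1}(opprK M) -scaleN1r.
by apply: le_trans (opnormZ _ _ _ _) _; rewrite // normrN1 mul1r.
Qed.

Lemma opnorm1 nv : mnorm nv -> (0 < s)%N -> opnorm nv 1%:M = 1.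
Proof.
move=> [hn _] s0; apply: opnorm_eq => // [x|d d0].
  by rewrite mul1mx mul1r.
have j : 'I_s by exact: Ordinal s0.
exists (evec j); split; first exact: evec_neq0.
rewrite mul1mx mulrBl mul1r ltrBlDr ltrDl mulr_gt0 // nv_gt0 //; exact: evec_neq0.
Qed.

End Gen.

Set Implicit Arguments. Unset Strict Implicit. Unset Printing Implicit Defensive.

Section MM.
Variable R : realType.
Variable s : nat.
Implicit Types (nv : 'cV[R]_s -> R) (x y : 'cV[R]_s) (M N : 'M[R]_s).

Definition phi nv M (e : R) := (opnorm nv (1%:M + e *: M) - 1) / e.

Lemma phi_lb nv M e : mnorm nv -> (0 < s)%N -> 0 < e -> - opnorm nv M <= phi nv M e.
Proof.
move=> h s0 e0; rewrite /phi ler_pdivlMr // mulNr lerBrDr.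
have H1 := opnormD (1%:M + e *: M) ((- e) *: M) h s0.
rewrite scaleNr addrK opnorm1 // opnormN // in H1.
rewrite addrC lerBlDr; apply: le_trans H1 _; rewrite lerD2l.
by apply: le_trans (opnormZ _ _ h s0) _; rewrite gtr0_norm // mulrC.
Qed.

Lemma phi_mono nv M e1 e2 : mnorm nv -> (0 < s)%N -> 0 < e1 -> e1 <= e2 ->
  phi nv M e1 <= phi nv M e2.
Proof.
move=> h s0 e10 e12; have e20 : 0 < e2 by apply: lt_le_trans e12.
set t := e1 / e2.
have t0 : 0 < t by rewrite divr_gt0.
have t1 : t <= 1 by rewrite ler_pdivrMr // mul1r.
rewrite /phi.
have -> : 1%:M + e1 *: M = (1 - t) *: 1%:M + t *: (1%:M + e2 *: M).
  rewrite scalerDr scalerA /t mulfVK ?gt_eqF // scalerBl scale1r addrA.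
  by rewrite -[X in _ = X + _]addrA [X in _ = _ + X + _]addrC subrr addr0.
have H : opnorm nv ((1 - t) *: 1%:M + t *: (1%:M + e2 *: M)) <=
         (1 - t) + t * opnorm nv (1%:M + e2 *: M).
  apply: le_trans (opnormD _ _ h s0) _; apply: lerD.
    apply: le_trans (opnormZ _ _ h s0) _; rewrite opnorm1 // mulr1 ger0_norm //.
    by rewrite subr_ge0.
  by apply: le_trans (opnormZ _ _ h s0) _; rewrite gtr0_norm.
rewrite ler_pdivrMr //; apply: le_trans (lerB H (lexx 1)) _.
rewrite le_eqVlt; apply/orP; left; apply/eqP; rewrite /t.
by field; rewrite gt_eqF.
Qed.

Lemma mm_cvg nv M : mnorm nv -> (0 < s)%N ->
  phi nv M e @[e --> 0^'+] --> matmeas nv M.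
Proof.
move=> h s0.
have : cvg (phi nv M e @[e --> 0^'+]).
  have H1 : \forall x \near 0^'+, {in `]0, x[ &, {homo phi nv M : n m / n <= m}}.
    near=> x.
    move=> a b; rewrite !in_itv /= => /andP[a0 ax] /andP[b0 bx] ab.
    exact: phi_mono.
  have H2 : \forall x \near 0^'+, has_lbound [set phi nv M y | y in `]0, x[].
    near=> x.
    exists (- opnorm nv M) => y [e]; rewrite /= in_itv /= => /andP[e0 ex] <-.
    exact: phi_lb.
  exact: (nondecreasing_at_right_is_cvgr H1 H2).
by [].
Unshelve. all: by end_near.
Qed.

Lemma mm_neg nv M : mnorm nv -> (0 < s)%N -> 0 <= matmeas nv M + matmeas nv (- M).
Proof.
move=> h s0.
have H : (fun e => phi nv M e + phi nv (- M) e) @ 0^'+ --> matmeas nv M + matmeas nv (- M).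
  by apply: cvgD; exact: mm_cvg.
rewrite -(cvg_lim _ H) //; apply: limr_ge; first by apply/cvg_ex; eexists; exact: H.
near=> e.
have e0 : 0 < e by near: e; exact: nbhs_right_gt.
rewrite /phi -mulrDl divr_ge0 ?(ltW e0) // addrACA -opprD subr_ge0.
have E : 1%:M = 2^-1 *: ((1%:M + e *: M) + (1%:M + e *: - M)) :> 'M[R]_s.
  rewrite scalerN addrACA subrr addr0.
  apply/matrixP => i j; rewrite !mxE.
  case: (i == j) => /=; last by rewrite addr0 mulr0.
  by field.
have H2 := opnormZ (1%:M + e *: M + (1%:M + e *: - M)) (2^-1) h s0.
rewrite -E opnorm1 // in H2.
have H3 := opnormD (1%:M + e *: M) (1%:M + e *: - M) h s0.
have H4 : 0 < 2^-1 :> R by rewrite invr_gt0.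
rewrite (ger0_norm (ltW H4)) in H2.
have := le_trans H2 (ler_wpM2l (ltW H4) H3).
by rewrite ler_pdivlMl // mulr1 mulr2n.
Unshelve. all: by end_near.
Qed.

End MM.

Set Implicit Arguments. Unset Strict Implicit. Unset Printing Implicit Defensive.

Section Mink.
Variable R : realType.

Lemma Lcount (q : R) (s : nat) (h : nat -> R) : (forall k, (s <= k)%N -> h k = 0) -> 0 < q ->
  Lnorm counting q%:E (EFin \o h) = ((\sum_(j < s) `|h j| `^ q) `^ q^-1)%:E.
Proof.
move=> hs q0; rewrite Lnorm_counting //.
rewrite (nneseries_split 0 s); last by move=> k; rewrite poweR_ge0.
rewrite add0n ereal_series_cond eseries0 ?adde0; last first.
  move=> k _ /andP[hk _]; rewrite /= hs //.
  have -> : `|0 : R| = 0 by exact: normr0.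
  by rewrite powR0 // gt_eqF.
rewrite big_mkord.
under eq_bigr => i _ do rewrite (_ : (EFin \o h) i = (h i)%:E) // abse_EFin poweR_EFin.
by rewrite sumEFin poweR_EFin.
Qed.

Lemma fin_minkowski (q : R) (s : nat) (a b : nat -> R) : 1 <= q ->
  (\sum_(j < s) `|a j + b j| `^ q) `^ q^-1 <=
  (\sum_(j < s) `|a j| `^ q) `^ q^-1 + (\sum_(j < s) `|b j| `^ q) `^ q^-1.
Proof.
move=> q1; have q0 : 0 < q by apply: lt_le_trans q1.
pose f k := if (k < s)%N then a k else 0.
pose g k := if (k < s)%N then b k else 0.
have mf : measurable_fun [set: nat] f by [].
have mg : measurable_fun [set: nat] g by [].
have := minkowski_EFin counting mf mg q1.
have hf : forall k, (s <= k)%N -> f k = 0 by move=> k hk; rewrite /f ltnNge hk.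
have hg : forall k, (s <= k)%N -> g k = 0 by move=> k hk; rewrite /g ltnNge hk.
have hfg : forall k, (s <= k)%N -> (f \+ g) k = 0 by move=> k hk; rewrite /= hf ?hg ?addr0.
rewrite (Lcount hf q0) (Lcount hg q0) (Lcount hfg q0).
have S1 : \sum_(j < s) `|(f \+ g) j| `^ q = \sum_(j < s) `|a j + b j| `^ q.
  by apply: eq_bigr => j _; rewrite /= /f /g ltn_ord.
have S2 : \sum_(j < s) `|f j| `^ q = \sum_(j < s) `|a j| `^ q.
  by apply: eq_bigr => j _; rewrite /= /f ltn_ord.
have S3 : \sum_(j < s) `|g j| `^ q = \sum_(j < s) `|b j| `^ q.
  by apply: eq_bigr => j _; rewrite /= /g ltn_ord.
by rewrite S1 S2 S3 -EFinD lee_fin.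
Qed.


End Mink.

Set Implicit Arguments. Unset Strict Implicit. Unset Printing Implicit Defensive.

Section Lp.
Variable R : realType.

Lemma bigmax_ge0 (I : finType) (F : I -> R) : 0 <= \big[Num.max/0]_i F i.
Proof.
exact: bigmax_ge_id.
Qed.

Definition vn s (x : 'cV[R]_s) (k : nat) : R :=
  match insub k with Some j => x j 0 | None => 0 end.

Lemma vnE s (x : 'cV[R]_s) (j : 'I_s) : vn x j = x j 0.
Proof. by rewrite /vn valK. Qed.

Lemma Lp_ge0 p s (x : 'cV[R]_s) : 0 <= Lp_norm p x.
Proof. by case: p => [q||] /=; rewrite ?powR_ge0 ?bigmax_ge0. Qed.

Lemma Lp_mnorm p s : (1%:E <= p)%E -> mnorm (@Lp_norm R p s).
Proof.
case: p => [q||] //= hq; last first.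
- split; first split.
  + move=> x hx; apply/matrixP => i k; rewrite (ord1 k) mxE; apply/eqP.
    rewrite -normr_eq0 eq_le normr_ge0 andbT -hx.
    exact: (le_bigmax _ (fun j => `|x j 0|) i).
  + move=> a x; rewrite (big_morph (fun t => `|a| * t) (id1 := 0) (op1 := Num.max)).
      by apply: eq_bigr => j _; rewrite mxE normrM.
      by move=> u v; rewrite maxr_pMr.
    by rewrite mulr0.
  + move=> x y; apply: bigmax_le; first by rewrite addr_ge0 ?bigmax_ge0.
    move=> j _; rewrite mxE; apply: le_trans (ler_normD _ _) _.
    by apply: lerD; exact: (le_bigmax _ (fun j => `|_ j 0|) j).
  + move=> u v huv; apply: bigmax_le; first exact: bigmax_ge0.
    move=> j _; apply: le_trans (huv j) _.
    exact: (le_bigmax _ (fun j => `|v j 0|) j).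
rewrite lee_fin in hq; have q0 : 0 < q by apply: lt_le_trans hq.
have qi0 : 0 <= q^-1 by rewrite invr_ge0 ltW.
split; first split.
- move=> x /powR_eq0_eq0 hx; apply/matrixP => i k; rewrite (ord1 k) mxE; apply/eqP.
  have := psumr_eq0P (P := xpredT) (F := fun j => `|x j 0| `^ q) _ hx (i := i).
  by move=> /(_ (fun _ _ => powR_ge0 _ _) isT) /powR_eq0_eq0 /eqP; rewrite normr_eq0.
- move=> a x; rewrite /Lp_norm.
  have -> : \sum_j `|(a *: x) j 0| `^ q = `|a| `^ q * \sum_j `|x j 0| `^ q.
    rewrite mulr_sumr; apply: eq_bigr => j _; rewrite mxE normrM powRM //.
  have S0 : 0 <= \sum_j `|x j 0| `^ q by apply: sumr_ge0 => j _; exact: powR_ge0.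
  by rewrite powRM ?powR_ge0 // -powRrM mulfV ?gt_eqF // powRr1.
- move=> x y; rewrite /Lp_norm; have M := fin_minkowski s (vn x) (vn y) hq.
  have E1 : \sum_(j < s) `|vn x j + vn y j| `^ q = \sum_j `|(x + y) j 0| `^ q.
    by apply: eq_bigr => j _; rewrite !vnE mxE.
  have E2 : forall z : 'cV[R]_s, \sum_(j < s) `|vn z j| `^ q = \sum_j `|z j 0| `^ q.
    by move=> z; apply: eq_bigr => j _; rewrite vnE.
  by rewrite E1 !E2 in M.
- move=> u v huv; rewrite /Lp_norm.
  have S0 : forall z : 'cV[R]_s, 0 <= \sum_j `|z j 0| `^ q.
    by move=> z; apply: sumr_ge0 => j _; exact: powR_ge0.
  apply: (ge0_ler_powR qi0); rewrite ?nnegrE ?S0 //.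
  apply: ler_sum => j _; apply: (ge0_ler_powR (ltW q0)); rewrite ?nnegrE ?normr_ge0 //; exact: huv.
Qed.


End Lp.

Set Implicit Arguments. Unset Strict Implicit. Unset Printing Implicit Defensive.

Section Idx.
Variables a b : nat.

Lemma idx2_proof (i : 'I_a) (j : 'I_b) : (i * b + j < a * b)%N.
Proof.
have := ltn_ord i; have := ltn_ord j => hj hi.
apply: (@leq_trans (i.+1 * b)); first by rewrite mulSnr ltn_add2l.
by rewrite leq_mul2r hi orbT.
Qed.
Definition idx2 (i : 'I_a) (j : 'I_b) : 'I_(a * b) := Ordinal (idx2_proof i j).

Lemma divo_proof (r : 'I_(a * b)) : (r %/ b < a)%N.
Proof.
case: b r => [|b'] r; first by case: r => r; rewrite muln0.
by rewrite ltn_divLR.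
Qed.
Definition divo (r : 'I_(a * b)) : 'I_a := Ordinal (divo_proof r).

Lemma modo_proof (r : 'I_(a * b)) : (r %% b < b)%N.
Proof.
case: b r => [|b'] r; first by case: r => r; rewrite muln0.
by rewrite ltn_pmod.
Qed.
Definition modo (r : 'I_(a * b)) : 'I_b := Ordinal (modo_proof r).

Lemma divo_idx2 i j : divo (idx2 i j) = i.
Proof.
apply: val_inj => /=; have hj := ltn_ord j.
have b0 : (0 < b)%N by apply: leq_ltn_trans (leq0n _) hj.
by rewrite divnMDl // divn_small // addn0.
Qed.

Lemma modo_idx2 i j : modo (idx2 i j) = j.
Proof. by apply: val_inj => /=; rewrite modnMDl modn_small. Qed.

Lemma idx2_divmod r : idx2 (divo r) (modo r) = r.
Proof. by apply: val_inj => /=; rewrite -divn_eq. Qed.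

Lemma sum_idx2 (R : nmodType) (F : 'I_(a * b) -> R) :
  \sum_r F r = \sum_i \sum_j F (idx2 i j).
Proof.
rewrite pair_big /=.
rewrite (reindex (fun p : 'I_a * 'I_b => idx2 p.1 p.2)) //.
exists (fun r => (divo r, modo r)) => [[i j] _|r _] /=.
  by rewrite divo_idx2 modo_idx2.
exact: idx2_divmod.
Qed.

End Idx.

Section Nest.
Variable R : realType.
Variable p : \bar R.
Hypothesis hp : (1%:E <= p)%E.

Lemma le_bigmaxr (I : finType) (F : I -> R) (x0 x : R) j :
  x <= F j -> x <= \big[Num.max/x0]_i F i.
Proof. by move=> h; apply: le_trans h (le_bigmax _ _ _). Qed.
Arguments le_bigmaxr [I F x0 x] j _.

Lemma Lp_eq_col s (x : 'cV[R]_s) : x = \col_j x j 0.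
Proof. by apply/matrixP => i k; rewrite (ord1 k) mxE. Qed.

Lemma powRK (q S : R) : 0 < q -> 0 <= S -> (S `^ q^-1) `^ q = S.
Proof. by move=> q0 S0; rewrite -powRrM mulVf ?gt_eqF // powRr1. Qed.

Lemma Lp_nest1 a b (F : 'I_a -> 'I_b -> R) :
  Lp_norm p (\col_r F (divo r) (modo r)) = Lp_norm p (\col_i Lp_norm p (\col_j F i j)).
Proof.
case: p hp => [q||] //= hq.
  rewrite lee_fin in hq; have q0 : 0 < q by apply: lt_le_trans hq.
  congr (_ `^ _); rewrite sum_idx2; apply: eq_bigr => i _.
  rewrite mxE ger0_norm ?powR_ge0 // powRK //; last by apply: sumr_ge0 => j _; exact: powR_ge0.
  by apply: eq_bigr => j _; rewrite !mxE divo_idx2 modo_idx2.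
apply/eqP; rewrite eq_le; apply/andP; split.
  apply: bigmax_le; first exact: bigmax_ge0.
  move=> r _; rewrite mxE; apply: (le_bigmaxr (divo r)); rewrite mxE.
  rewrite [X in _ <= X]ger0_norm ?bigmax_ge0 //.
  by apply: (le_bigmaxr (modo r)); rewrite mxE.
apply: bigmax_le; first exact: bigmax_ge0.
move=> i _; rewrite mxE ger0_norm ?bigmax_ge0 //.
apply: bigmax_le; first exact: bigmax_ge0.
move=> j _; apply: (le_bigmaxr (idx2 i j)).
by rewrite !mxE divo_idx2 modo_idx2.
Qed.

Lemma Lp_nest2 a b (F : 'I_a -> 'I_b -> R) :
  Lp_norm p (\col_r F (divo r) (modo r)) = Lp_norm p (\col_j Lp_norm p (\col_i F i j)).
Proof.
case: p hp => [q||] //= hq.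
  rewrite lee_fin in hq; have q0 : 0 < q by apply: lt_le_trans hq.
  congr (_ `^ _); rewrite sum_idx2 exchange_big; apply: eq_bigr => j _.
  rewrite mxE ger0_norm ?powR_ge0 // powRK //; last by apply: sumr_ge0 => i _; exact: powR_ge0.
  by apply: eq_bigr => i _; rewrite !mxE divo_idx2 modo_idx2.
apply/eqP; rewrite eq_le; apply/andP; split.
  apply: bigmax_le; first exact: bigmax_ge0.
  move=> r _; rewrite mxE; apply: (le_bigmaxr (modo r)); rewrite mxE.
  rewrite [X in _ <= X]ger0_norm ?bigmax_ge0 //.
  by apply: (le_bigmaxr (divo r)); rewrite mxE.
apply: bigmax_le; first exact: bigmax_ge0.
move=> j _; rewrite mxE ger0_norm ?bigmax_ge0 //.
apply: bigmax_le; first exact: bigmax_ge0.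
move=> i _; apply: (le_bigmaxr (idx2 i j)).
by rewrite !mxE divo_idx2 modo_idx2.
Qed.

Lemma Lp_mono_col s (c d : 'I_s -> R) : (forall j, 0 <= c j <= d j) ->
  Lp_norm p (\col_j c j) <= Lp_norm p (\col_j d j).
Proof.
move=> H; have [_ hm] := Lp_mnorm s hp; apply: hm => j; rewrite !mxE.
have /andP[c0 cd] := H j; rewrite !ger0_norm //; exact: le_trans cd.
Qed.

Lemma Lp_scale_col s k (c : 'I_s -> R) :
  Lp_norm p (\col_j (k * c j)) = `|k| * Lp_norm p (\col_j c j).
Proof.
have [[_ hZ _] _] := Lp_mnorm s hp; rewrite -hZ; congr (Lp_norm p _).
by apply/matrixP => i l; rewrite !mxE.
Qed.

Lemma Lp_abs_col s (u : 'cV[R]_s) : Lp_norm p (\col_j `|u j 0|) = Lp_norm p u.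
Proof.
case: p => [q||] /=; first by congr (_ `^ _); apply: eq_bigr => j _; rewrite mxE normr_id.
- by apply: eq_bigr => j _; rewrite mxE normr_id.
- by apply: eq_bigr => j _; rewrite mxE normr_id.
Qed.

End Nest.

Set Implicit Arguments. Unset Strict Implicit. Unset Printing Implicit Defensive.

Section Kron.
Variable R : realType.
Variables a b : nat.

Lemma kronE (X : 'M[R]_a) (Y : 'M[R]_b) r c :
  kron X Y r c = X (divo r) (divo c) * Y (modo r) (modo c).
Proof.
rewrite /kron mxE /mxnat.
rewrite (valK (divo r) : insub (r %/ b)%N = Some (divo r)).
rewrite (valK (divo c) : insub (c %/ b)%N = Some (divo c)).
rewrite (valK (modo r) : insub (r %% b)%N = Some (modo r)).
by rewrite (valK (modo c) : insub (c %% b)%N = Some (modo c)).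
Qed.

Definition ten (u : 'cV[R]_a) (v : 'cV[R]_b) : 'cV[R]_(a * b) :=
  \col_r (u (divo r) 0 * v (modo r) 0).

Lemma kron_ten X Y u v : kron X Y *m ten u v = ten (X *m u) (Y *m v).
Proof.
apply/matrixP => r k; rewrite (ord1 k) !mxE sum_idx2 big_distrlr /=.
apply: eq_bigr => i _; apply: eq_bigr => j _.
by rewrite kronE !mxE divo_idx2 modo_idx2 mulrACA.
Qed.

Lemma kron_apply X Y (z : 'cV[R]_(a * b)) i j :
  (kron X Y *m z) (idx2 i j) 0 = \sum_l X i l * \sum_m Y j m * z (idx2 l m) 0.
Proof.
rewrite mxE sum_idx2; apply: eq_bigr => l _; rewrite mulr_sumr.
by apply: eq_bigr => m _; rewrite kronE !divo_idx2 !modo_idx2 mulrA.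
Qed.

Variable p : \bar R.
Hypothesis hp : (1%:E <= p)%E.

Lemma Lp_ten u v : Lp_norm p (ten u v) = Lp_norm p u * Lp_norm p v.
Proof.
rewrite /ten (Lp_nest1 hp (fun i j => u i 0 * v j 0)).
have E : forall i : 'I_a, Lp_norm p (\col_j (u i 0 * v j 0)) = `|u i 0| * Lp_norm p v.
  by move=> i; rewrite Lp_scale_col // -Lp_eq_col.
have -> : \col_i Lp_norm p (\col_j (u i 0 * v j 0)) = \col_i (Lp_norm p v * `|u i 0|).
  by apply/matrixP => i k; rewrite !mxE E mulrC.
by rewrite Lp_scale_col // Lp_abs_col // ger0_norm ?Lp_ge0 // mulrC.
Qed.

Lemma Lp_kron_le (X : 'M[R]_a) (Y : 'M[R]_b) (z : 'cV[R]_(a * b)) : (0 < a)%N -> (0 < b)%N ->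
  Lp_norm p (kron X Y *m z) <= opnorm (Lp_norm p) X * opnorm (Lp_norm p) Y * Lp_norm p z.
Proof.
move=> a0 b0; set y := kron X Y *m z.
have hma := Lp_mnorm a hp; have hmb := Lp_mnorm b hp.
have Ey : y = \col_r (fun i j => y (idx2 i j) 0) (divo r) (modo r).
  by apply/matrixP => r k; rewrite (ord1 k) mxE idx2_divmod.
rewrite {1}Ey (Lp_nest2 hp (fun i j => y (idx2 i j) 0)).
pose W l := Y *m \col_m z (idx2 l m) 0.
have E2 : forall j, \col_i y (idx2 i j) 0 = X *m \col_l W l j 0.
  move=> j; apply/matrixP => i k; rewrite (ord1 k) [LHS]mxE /y kron_apply [RHS]mxE.
  apply: eq_bigr => l _; rewrite /W mxE mxE; congr (_ * _); apply: eq_bigr => m _; by rewrite mxE.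
apply: le_trans (_ : Lp_norm p (\col_j (opnorm (Lp_norm p) X * Lp_norm p (\col_l W l j 0))) <= _).
  apply: Lp_mono_col => // j; rewrite Lp_ge0 /= E2; exact: opnorm_ub.
rewrite Lp_scale_col // ger0_norm ?opnorm_ge0 // -mulrA ler_wpM2l ?opnorm_ge0 //.
rewrite -(Lp_nest2 hp (fun l j => W l j 0)) (Lp_nest1 hp (fun l j => W l j 0)).
apply: le_trans (_ : Lp_norm p (\col_l (opnorm (Lp_norm p) Y * Lp_norm p (\col_m z (idx2 l m) 0))) <= _).
  apply: Lp_mono_col => // l; rewrite Lp_ge0 /= -Lp_eq_col; exact: opnorm_ub.
rewrite Lp_scale_col // ger0_norm ?opnorm_ge0 // ler_wpM2l ?opnorm_ge0 //.
rewrite -(Lp_nest1 hp (fun l m => z (idx2 l m) 0)).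
by rewrite le_eqVlt; apply/orP; left; apply/eqP; congr (Lp_norm p _); apply/matrixP => r k; rewrite (ord1 k) mxE idx2_divmod.
Qed.


Lemma kron_opnorm (X : 'M[R]_a) (Y : 'M[R]_b) : (0 < a)%N -> (0 < b)%N ->
  opnorm (Lp_norm p) (kron X Y) = opnorm (Lp_norm p) X * opnorm (Lp_norm p) Y.
Proof.
move=> a0 b0; have hma := Lp_mnorm a hp; have hmb := Lp_mnorm b hp.
have hmab := Lp_mnorm (a * b) hp; have ab0 : (0 < a * b)%N by rewrite muln_gt0 a0.
apply/eqP; rewrite eq_le; apply/andP; split.
  by apply: opnorm_le => // z; exact: Lp_kron_le.
set K := opnorm (Lp_norm p) (kron X Y).
have K0 : 0 <= K by exact: opnorm_ge0.
have H1 : forall u v, Lp_norm p (X *m u) * Lp_norm p (Y *m v) <= K * (Lp_norm p u * Lp_norm p v).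
  by move=> u v; rewrite -!Lp_ten -kron_ten; exact: opnorm_ub.
have H2 : forall v, opnorm (Lp_norm p) X * Lp_norm p (Y *m v) <= K * Lp_norm p v.
  move=> v; have [c0|c0] := eqVneq (Lp_norm p (Y *m v)) 0.
    by rewrite c0 mulr0 mulr_ge0 ?Lp_ge0.
  have cp : 0 < Lp_norm p (Y *m v) by rewrite lt_neqAle eq_sym c0 Lp_ge0.
  rewrite -ler_pdivlMr //; apply: opnorm_le => // u.
  rewrite mulrAC ler_pdivlMr //; apply: le_trans (H1 u v) _.
  by rewrite le_eqVlt; apply/orP; left; apply/eqP; rewrite mulrA mulrAC.
have [x0|x0] := eqVneq (opnorm (Lp_norm p) X) 0; first by rewrite x0 mul0r.
have xp : 0 < opnorm (Lp_norm p) X by rewrite lt_neqAle eq_sym x0 opnorm_ge0.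
rewrite mulrC -ler_pdivlMr //; apply: opnorm_le => // v.
by rewrite mulrAC ler_pdivlMr // mulrC.
Qed.

End Kron.

Set Implicit Arguments. Unset Strict Implicit. Unset Printing Implicit Defensive.

Section KS.
Variable R : realType.
Variables a b : nat.
Variable p : \bar R.
Hypothesis hp : (1%:E <= p)%E.

Lemma eq_idx (r c : 'I_(a * b)) :
  (r == c) = (divo r == divo c) && (modo r == modo c).
Proof.
apply/eqP/andP => [->|[/eqP h1 /eqP h2]]; first by rewrite !eqxx.
by rewrite -(idx2_divmod r) -(idx2_divmod c) h1 h2.
Qed.

Lemma mxnat_d (X : 'M[R]_a) (r c : 'I_(a * b)) :
  mxnat X (r %/ b)%N (c %/ b)%N = X (divo r) (divo c).
Proof.
rewrite /mxnat (valK (divo r) : insub (r %/ b)%N = Some (divo r)).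
by rewrite (valK (divo c) : insub (c %/ b)%N = Some (divo c)).
Qed.

Lemma mxnat_m (Y : 'M[R]_b) (r c : 'I_(a * b)) :
  mxnat Y (r %% b)%N (c %% b)%N = Y (modo r) (modo c).
Proof.
rewrite /mxnat (valK (modo r) : insub (r %% b)%N = Some (modo r)).
by rewrite (valK (modo c) : insub (c %% b)%N = Some (modo c)).
Qed.

Lemma kronsum_id (A : 'M[R]_a) (B : 'M[R]_b) (e : R) :
  1%:M + e *: kronsum A B =
  kron (1%:M + e *: A) (1%:M + e *: B) - (e * e) *: kron A B.
Proof.
apply/matrixP => r c; rewrite !mxE !mxnat_d !mxnat_m !mxE eq_idx.
case: (divo r == divo c); case: (modo r == modo c) => /=; ring.
Qed.

Lemma phi_kron_cvg (A : 'M[R]_a) (B : 'M[R]_b) : (0 < a)%N -> (0 < b)%N ->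
  phi (Lp_norm p) (kronsum A B) e @[e --> 0^'+] -->
  matmeas (Lp_norm p) A + matmeas (Lp_norm p) B.
Proof.
move=> a0 b0; have hma := Lp_mnorm a hp; have hmb := Lp_mnorm b hp.
have hmab := Lp_mnorm (a * b) hp; have ab0 : (0 < a * b)%N by rewrite muln_gt0 a0.
set nA := Lp_norm p; set K := opnorm (Lp_norm p) (kron A B).
pose fA e := phi (Lp_norm p) A e.
pose fB e := phi (Lp_norm p) B e.
pose G e := fA e + fB e + e * (fA e * fB e).
have cA : fA e @[e --> 0^'+] --> matmeas (Lp_norm p) A by exact: mm_cvg.
have cB : fB e @[e --> 0^'+] --> matmeas (Lp_norm p) B by exact: mm_cvg.
have ce : e @[e --> 0^'+] --> (0 : R) by apply: cvg_at_right_filter; exact: cvg_id.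
have cG : G e @[e --> 0^'+] --> matmeas (Lp_norm p) A + matmeas (Lp_norm p) B + 0 * (matmeas (Lp_norm p) A * matmeas (Lp_norm p) B).
  apply: cvgD; first exact: cvgD.
  apply: cvgM; first exact: ce.
  exact: cvgM cA cB.
rewrite mul0r addr0 in cG.
have cK : (e * K) @[e --> 0^'+] --> (0:R).
  have := cvgMl (b := K) ce; rewrite mul0r; exact.
have cr : (phi (Lp_norm p) (kronsum A B) e - G e) @[e --> 0^'+] --> (0 : R).
  apply: (@squeeze_cvgr _ _ _ _ (fun e => - (e * K)) (fun e => e * K)).
  - near=> e.
    have e0 : 0 < e by near: e; exact: nbhs_right_gt.
    have Eq := kronsum_id A B e.
    set N := opnorm (Lp_norm p) (1%:M + e *: kronsum A B).
    set al := opnorm (Lp_norm p) (1%:M + e *: A).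
    set be := opnorm (Lp_norm p) (1%:M + e *: B).
    have Hk : opnorm (Lp_norm p) (kron (1%:M + e *: A) (1%:M + e *: B)) = al * be.
      exact: kron_opnorm.
    have HK : opnorm (Lp_norm p) ((e * e) *: kron A B) <= e * e * K.
      by apply: le_trans (opnormZ _ _ hmab ab0) _; rewrite (ger0_norm (mulr_ge0 (ltW e0) (ltW e0))).
    have U : N <= al * be + e * e * K.
      rewrite /N Eq -Hk; apply: le_trans (opnormD _ _ hmab ab0) _.
      by rewrite lerD2l opnormN.
    have L : al * be <= N + e * e * K.
      rewrite -Hk.
      have -> : kron (1%:M + e *: A) (1%:M + e *: B) =
                (1%:M + e *: kronsum A B) + (e * e) *: kron A B by rewrite Eq subrK.
      by apply: le_trans (opnormD _ _ hmab ab0) _; rewrite lerD2l.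
    have E : phi (Lp_norm p) (kronsum A B) e - G e = (N - al * be) / e.
      by rewrite /G /fA /fB /phi -/N -/al -/be; field; rewrite gt_eqF.
    rewrite E; apply/andP; split.
      rewrite ler_pdivlMr //; nra.
    rewrite ler_pdivrMr //; nra.
  - rewrite -[X in _ --> X]oppr0; apply: cvgN; exact: cK.
  - exact: cK.
have H : (G e + (phi (Lp_norm p) (kronsum A B) e - G e)) @[e --> 0^'+] -->
    matmeas (Lp_norm p) A + matmeas (Lp_norm p) B + 0 by apply: cvgD.
rewrite addr0 in H.
apply: (cvg_trans _ H); apply: near_eq_cvg; near=> e.
by rewrite /= addrC subrK.
Unshelve. all: by end_near.
Qed.

End KS.

Unset Implicit Arguments. Set Strict Implicit. Unset Printing Implicit Defensive.

Lemma opnorm_approx (R : realType) (s : nat) (nv : 'cV[R]_s -> R) (M : 'M[R]_s) :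
  mnorm nv -> (0 < s)%N -> forall d, 0 < d ->
  exists x, x != 0 /\ (opnorm nv M - d) * nv x < nv (M *m x).
Proof.
move=> h s0 d d0; have [hn _] := h.
have [K [K0 HK]] := mnorm_bnd M h.
have hs : has_sup (Sset nv M).
  split.
    have j : 'I_s by exact: Ordinal s0.
    by exists (nv (M *m evec R j) / nv (evec R j)); exists (evec R j) => //; exact: evec_neq0.
  exists K => _ [y /= yn0 <-]; rewrite ler_pdivrMr ?nv_gt0 //.
have [v [x /= xn0 <-] Hv] := sup_adherent d0 hs.
exists x; split => //; rewrite -ltr_pdivlMr ?nv_gt0 //.
Qed.

Lemma bigmax_attained (R : realType) (r : nat) (F : 'I_r.+1 -> R) :
  exists i0, \big[Num.max/F ord0]_i F i = F i0.
Proof.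
apply: (big_ind (fun v => exists i0, v = F i0)); first by exists ord0.
  move=> u v [i ->] [j ->]; case: (leP (F i) (F j)) => _.
  - by exists j.
  - by exists i.
by move=> i _; exists i.
Qed.

Section Block.
Variable R : realType.
Variable r : nat.
Variable p_ : 'I_r.+1 -> nat.
Local Notation sp := (\sum_i p_ i)%N.
Variable nvs : forall i, 'cV[R]_(p_ i) -> R.
Hypothesis hnvs : forall i, mnorm (nvs i).
Variable nu0 : 'cV[R]_r.+1 -> R.
Hypothesis hnu0 : mnorm nu0.

Definition bnorm (y : 'cV[R]_sp) := nu0 (\col_i nvs i (submxcol y i)).

Lemma submxcolZ' (a : R) (y : 'cV[R]_sp) i : submxcol (a *: y) i = a *: submxcol y i.
Proof. by apply/matrixP => j k; rewrite !mxE. Qed.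

Lemma submxcolD' (x y : 'cV[R]_sp) i : submxcol (x + y) i = submxcol x i + submxcol y i.
Proof. by apply/matrixP => j k; rewrite !mxE. Qed.

Lemma nu0_mono_col (c d : 'I_r.+1 -> R) : (forall j, 0 <= c j <= d j) ->
  nu0 (\col_j c j) <= nu0 (\col_j d j).
Proof.
move=> H; have [_ hm] := hnu0; apply: hm => j; rewrite !mxE.
have /andP[c0 cd] := H j; rewrite !ger0_norm //; exact: le_trans cd.
Qed.

Lemma nu0_scale_col k (c : 'I_r.+1 -> R) :
  nu0 (\col_j (k * c j)) = `|k| * nu0 (\col_j c j).
Proof.
have [[_ hZ _] _] := hnu0; rewrite -hZ; congr (nu0 _).
by apply/matrixP => i l; rewrite !mxE.
Qed.

Lemma bnorm_mnorm : mnorm bnorm.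
Proof.
have [[h0 hZ hD] hm] := hnu0.
split; first split.
- move=> y /h0 /matrixP H.
  have Hb : forall i, submxcol y i = 0.
    move=> i; have := H i 0; rewrite !mxE => Hi.
    by have [[h0i _ _] _] := hnvs i; apply: h0i.
  rewrite -(submxcolK y); apply/matrixP => s t; rewrite !mxE.
  by have := Hb (tagnat.sig1 s); move/matrixP/(_ (tagnat.sig2 s) t); rewrite !mxE.
- move=> a y; rewrite /bnorm -[`|a|]normr_id -nu0_scale_col; congr (nu0 _).
  apply/matrixP => i k; rewrite !mxE submxcolZ'.
  by have [[_ hZi _] _] := hnvs i; rewrite hZi.
- move=> x y; rewrite /bnorm; apply: le_trans (hD _ _).
  have -> : \col_i nvs i (submxcol x i) + \col_i nvs i (submxcol y i) =
            \col_i (nvs i (submxcol x i) + nvs i (submxcol y i)).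
    by apply/matrixP => i k; rewrite !mxE.
  apply: nu0_mono_col => j; rewrite submxcolD'.
  have [hj _] := hnvs j; have [_ _ hDj] := hj.
  by rewrite nv_ge0 //= hDj.
- move=> u v huv; rewrite /bnorm; apply: nu0_mono_col => j.
  have [hj hmj] := hnvs j; rewrite nv_ge0 //=; apply: hmj => l.
  by rewrite !mxE; exact: huv.
Qed.

Lemma block_opnorm (M : 'M[R]_sp) (Ms : forall i, 'M[R]_(p_ i)) (hp : forall i, (0 < p_ i)%N)
  (hM : forall (y : 'cV[R]_sp) (i : 'I_r.+1), submxcol (M *m y) i = Ms i *m submxcol y i) :
  opnorm bnorm M =
  \big[Num.max/opnorm (nvs ord0) (Ms ord0)]_i opnorm (nvs i) (Ms i).
Proof.
set c := \big[Num.max/_]_i _.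
have mulD := hM.
have c_ge : forall i, opnorm (nvs i) (Ms i) <= c.
  by move=> i; exact: (le_bigmax _ (fun i => opnorm (nvs i) (Ms i)) i).
have c0 : 0 <= c by apply: le_trans (c_ge ord0); exact: opnorm_ge0.
have [[h0 hZ hD] hm] := hnu0.
apply: opnorm_eq; first by case: bnorm_mnorm.
  move=> y; rewrite /bnorm.
  apply: le_trans (_ : nu0 (\col_i (c * nvs i (submxcol y i))) <= _).
    apply: nu0_mono_col => j; rewrite mulD.
    have [hj _] := hnvs j; rewrite nv_ge0 //=.
    apply: le_trans (opnorm_ub _ _ (hnvs j)) _.
    by rewrite ler_wpM2r ?nv_ge0.
  by rewrite nu0_scale_col ger0_norm.
move=> d d0.
have [i0 Ec] := bigmax_attained R r (fun i => opnorm (nvs i) (Ms i)).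
have [w [wn0 Hw]] := opnorm_approx R (p_ i0) (nvs i0) (Ms i0) (hnvs i0) (hp i0) d d0.
pose y := \mxcol_i (if i == i0 then conform_mx 0 w else 0 : 'cV[R]_(p_ i)).
have Ey : forall i, submxcol y i = if i == i0 then conform_mx 0 w else 0.
  by move=> i; rewrite mxcolK.
have col1 : \col_i nvs i (submxcol y i) = nvs i0 w *: evec R i0.
  apply/matrixP => i k; rewrite (ord1 k) !mxE Ey.
  case: (eqVneq i i0) => [->|ne]; first by rewrite eqxx conform_mx_id mulr1.
  by rewrite /= mulr0; have [hi _] := hnvs i; exact: nv0.
have col2 : \col_i nvs i (submxcol (M *m y) i) = nvs i0 (Ms i0 *m w) *: evec R i0.
  apply/matrixP => i k; rewrite (ord1 k) !mxE mulD Ey.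
  case: (eqVneq i i0) => [->|ne]; first by rewrite eqxx conform_mx_id mulr1.
  by rewrite /= mulr0 mulmx0; have [hi _] := hnvs i; exact: nv0.
have hi0 := hnvs i0; have [hn0 _] := hi0.
have e0 : 0 < nu0 (evec R i0) by apply: nv_gt0; [case: hnu0 | exact: evec_neq0].
exists y; split.
  apply/eqP => y0.
  have : bnorm y = 0 by rewrite y0; apply: nv0; case: bnorm_mnorm.
  rewrite /bnorm col1 hZ ger0_norm ?nv_ge0 //; apply/eqP.
  by rewrite mulf_neq0 // ?gt_eqF // nv_gt0.
rewrite /bnorm col1 col2 !hZ !ger0_norm ?nv_ge0 // /c Ec mulrA ltr_pM2r //.
Qed.

Lemma key_opnorm N (E : sp = N) (Ms : forall i, 'M[R]_(p_ i)) (e : R)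
  (hp : forall i, (0 < p_ i)%N) :
  opnorm (fun y : 'cV[R]_N => bnorm (castmx (esym E, erefl) y)) (1%:M + e *: castmx (E, E) (mxdiag Ms)) =
  \big[Num.max/opnorm (nvs ord0) (1%:M + e *: Ms ord0)]_i opnorm (nvs i) (1%:M + e *: Ms i).
Proof.
case: N / E; rewrite castmx_id.
have -> : (fun y : 'cV[R]_sp => bnorm (castmx (esym (erefl sp), erefl) y)) = bnorm.
  by apply/funext => y; rewrite castmx_id.
apply: block_opnorm => // y i.
rewrite mulmxDl mul1mx -scalemxAl submxcolD' submxcolZ'.
rewrite -[X in mxdiag Ms *m X](submxcolK y) mul_mxdiag_mxcol mxcolK.
by rewrite mulmxDl mul1mx -scalemxAl.
Qed.

End Block.

Unset Implicit Arguments. Set Strict Implicit. Unset Printing Implicit Defensive.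

Lemma opnorm_sim (R : realType) (s : nat) (nv : 'cV[R]_s -> R) (P M : 'M[R]_s) :
  P \in unitmx ->
  opnorm (fun x => nv (invmx P *m x)) M = opnorm nv (invmx P *m M *m P).
Proof.
move=> hP; rewrite /opnorm; congr sup; apply/seteqP; split => _ [x /= xn0 <-].
  exists (invmx P *m x) => /=.
    apply/eqP => h; move/eqP: xn0; apply.
    by rewrite -(mulKVmx hP x) h mulmx0.
  by rewrite -!mulmxA mulKVmx.
exists (P *m x) => /=.
  apply/eqP => h; move/eqP: xn0; apply.
  by rewrite -(mulKmx hP x) h mulmx0.
by rewrite mulKmx // !mulmxA.
Qed.

Lemma cvg_bigmax (R : realType) (r : nat) (F : 'I_r.+1 -> R -> R) (l : 'I_r.+1 -> R) :
  (forall i, F i e @[e --> 0^'+] --> l i) ->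
  (\big[Num.max/F ord0 e]_i F i e) @[e --> 0^'+] --> \big[Num.max/l ord0]_i l i.
Proof.
move=> H.
pose op1 (f g : R -> R) := fun e => Num.max (f e) (g e).
have -> : (fun e => \big[Num.max/F ord0 e]_i F i e) = \big[op1/F ord0]_i F i.
  apply/funext => e; apply/esym.
  by rewrite (big_morph (fun f : R -> R => f e) (id1 := F ord0 e) (op1 := Num.max) (op2 := op1) (id2 := F ord0)).
apply: (big_ind2 (fun (f : R -> R) (x : R) => f e @[e --> 0^'+] --> x)) => //.
move=> f1 x1 f2 x2 h1 h2; rewrite /op1.
have -> : (fun e => Num.max (f1 e) (f2 e)) = (fun e => (f1 e + f2 e + `|f1 e - f2 e|) / 2).
  by apply/funext => e; rewrite maxr_absE.
rewrite maxr_absE; apply: cvgMl; apply: cvgD; first exact: cvgD.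
by apply: cvg_norm; apply: cvgB.
Qed.

Lemma bigmax_shift (R : realType) (r : nat) (a : 'I_r.+1 -> R) (e : R) : 0 < e ->
  (\big[Num.max/a ord0]_i a i - 1) / e = \big[Num.max/(a ord0 - 1) / e]_i ((a i - 1) / e).
Proof.
move=> e0; apply: (big_morph (fun t => (t - 1) / e)) => //.
have mono : forall u v : R, u <= v -> (u - 1) / e <= (v - 1) / e.
  by move=> u v uv; apply: ler_wpM2r; [rewrite invr_ge0 ltW | rewrite lerD2r].
move=> x y; case: (leP x y) => h.
  by rewrite (max_r (mono _ _ h)).
by rewrite (max_l (mono _ _ (ltW h))).
Qed.

Unset Implicit Arguments. Set Strict Implicit. Unset Printing Implicit Defensive.

Theorem corollary1 (R : realType) (n m k : nat) (A : 'M[R]_n) (B : 'M[R]_m)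
  (hk0 : (0 < k)%N) (hk : (k <= n + m)%N)
  (p : 'I_(ihi m k - ilo n k).+1 -> \bar R)
  (hp : forall i, (1%:E <= p i)%E)
  (nu0 : 'cV[R]_(ihi m k - ilo n k).+1 -> R)
  (hnu0 : is_norm nu0) (hmon : monotonic nu0)
  (P : 'M[R]_('C(n + m, k))) (hP : is_perm_mx P)
  (hPC : addcomp k (block_mx A 0 0 B)
         = P *m castmx (bdim_sum hk, bdim_sum hk) (blockD k A B) *m invmx P) :
  let normx (x : 'cV[R]_('C(n + m, k))) :=
    nu0 (\col_i Lp_norm (p i)
           (@submxcol _ _ (bdim n m k) _ (castmx (esym (bdim_sum hk), erefl) x) i)) in
  let normP (x : 'cV[R]_('C(n + m, k))) := normx (invmx P *m x) in
  let f (i : 'I_(ihi m k - ilo n k).+1) :=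
    matmeas (Lp_norm (p i)) (addcomp (k - (ilo n k + i)) A)
    + matmeas (Lp_norm (p i)) (addcomp (ilo n k + i) B) in
  let g (i : 'I_(ihi m k - ilo n k).+1) :=
    - matmeas (Lp_norm (p i)) (- addcomp (k - (ilo n k + i)) A)
    - matmeas (Lp_norm (p i)) (- addcomp (ilo n k + i) B) in
  matmeas normP (addcomp k (block_mx A 0 0 B)) = \big[Num.max/f ord0]_i f i
  /\ \big[Num.min/g ord0]_i g i <= matmeas normP (addcomp k (block_mx A 0 0 B)).
Proof.
move=> normx normP f g.
have hdA : forall j : 'I_(ihi m k - ilo n k).+1, (0 < 'C(n, k - (ilo n k + j)))%N.
  by move=> j; rewrite bin_gt0; have := ltn_ord j; rewrite /ilo /ihi; lia.
have hdB : forall j : 'I_(ihi m k - ilo n k).+1, (0 < 'C(m, ilo n k + j))%N.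
  by move=> j; rewrite bin_gt0; have := ltn_ord j; have := hk; rewrite /ilo /ihi; lia.
have hdP : forall j, (0 < bdim n m k j)%N by move=> j; rewrite /bdim muln_gt0 hdA hdB.
have hPu : P \in unitmx by case/is_perm_mxP: hP => s ->; exact: unitmx_perm.
pose Ms := fun j : 'I_(ihi m k - ilo n k).+1 =>
  (kronsum (addcomp (k - (ilo n k + j)) A) (addcomp (ilo n k + j) B) : 'M[R]_(bdim n m k j)).
have hnvs : forall i, mnorm (@Lp_norm R (p i) (bdim n m k i)).
  by move=> i; exact: Lp_mnorm.
have hnu : mnorm nu0 by split.
set C := addcomp k (block_mx A 0 0 B).
set D' := castmx (bdim_sum hk, bdim_sum hk) (blockD k A B).
have key : forall e, 0 < e ->
    \big[Num.max/phi (Lp_norm (p ord0)) (Ms ord0) e]_i phi (Lp_norm (p i)) (Ms i) e =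
    (opnorm normP (1%:M + e *: C) - 1) / e.
  move=> e e0.
  rewrite /normP (opnorm_sim _ _ _ _ _ hPu).
  have -> : invmx P *m (1%:M + e *: C) *m P = 1%:M + e *: D'.
    rewrite /C hPC mulmxDr mulmx1 mulmxDl mulVmx // -scalemxAr -scalemxAl.
    by rewrite !mulmxA mulVmx // mul1mx mulmxKV.
  have Kq : opnorm normx (1%:M + e *: D') =
      \big[Num.max/opnorm (Lp_norm (p ord0)) (1%:M + e *: Ms ord0)]_i
        opnorm (Lp_norm (p i)) (1%:M + e *: Ms i).
    exact: (key_opnorm R _ (bdim n m k) (fun i => @Lp_norm R (p i) (bdim n m k i)) hnvs nu0 hnu
             _ (bdim_sum hk) Ms e hdP).
  by rewrite Kq bigmax_shift.
have cvgP : (fun e => (opnorm normP (1%:M + e *: C) - 1) / e) @ 0^'+ -->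
            \big[Num.max/f ord0]_i f i.
  have H := cvg_bigmax R _ (fun i e => phi (Lp_norm (p i)) (Ms i) e) f
    (fun i => phi_kron_cvg (hp i) (hdA i) (hdB i)).
  apply: (cvg_trans _ H); apply: near_eq_cvg; near=> e.
  have e0 : 0 < e by near: e; exact: nbhs_right_gt.
  by rewrite /= key.
have E1 : matmeas normP C = \big[Num.max/f ord0]_i f i.
  by rewrite /matmeas (cvg_lim _ cvgP).
split; first exact: E1.
rewrite E1; apply: le_trans (bigmin_le _ ord0 _) _.
apply: le_trans (le_bigmax _ _ ord0).
have h1 := mm_neg (addcomp (k - (ilo n k + ord0)) A) (Lp_mnorm _ (hp ord0)) (hdA ord0).
have h2 := mm_neg (addcomp (ilo n k + ord0) B) (Lp_mnorm _ (hp ord0)) (hdB ord0).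
rewrite /g /f; move: h1 h2.
set a := matmeas (Lp_norm (p ord0)) (addcomp (k - (ilo n k + ord0)) A).
set a' := matmeas (Lp_norm (p ord0)) (- addcomp (k - (ilo n k + ord0)) A).
set b := matmeas (Lp_norm (p ord0)) (addcomp (ilo n k + ord0) B).
set b' := matmeas (Lp_norm (p ord0)) (- addcomp (ilo n k + ord0) B).
clearbody a a' b b'.
move=> h1 h2; lra.
Unshelve. all: by end_near.
Qed.
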